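(* Let $N(x)=\frac{1}{\sqrt{2\pi}}\int_{-\infty}^x e^{-t^2/2}\,dt$ be the standard normal cumulative distribution function. For $\alpha>0$ define the standardized call function $\chi_\alpha:(0,+\infty)\to\mathbb{R}$ by \[ \chi_\alpha(x) := N\Big(\tfrac{\alpha}{2}\big(x-\tfrac{1}{x}\big)\Big) - e^{\alpha^2/2}\, N\Big(-\tfrac{\alpha}{2}\big(x+\tfrac{1}{x}\big)\Big), \qquad x>0. \] Then for every $\alpha>0$: (i) $\lim_{x\to 0^+}\chi_\alpha(x)=0$ and $\lim_{x\to+\infty}\chi_\alpha(x)=1$; (ii) $\chi_\alpha$ is strictly increasing on $(0,+\infty)$; (iii) $\chi_\alpha$ is strictly convex on $(0,1]$ and strictly concave on $[1,+\infty)$. *)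

(* Defs.v *)
From Stdlib Require Import Reals.
From Coquelicot Require Import Coquelicot.
Open Scope R_scope.

Definition Ncdf (x : R) : R :=
  / sqrt (2 * PI) *
  RInt_gen (fun t => exp (- t ^ 2 / 2)) (Rbar_locally m_infty) (at_point x).

Definition chi (alpha x : R) : R :=
  Ncdf (alpha / 2 * (x - / x))
  - exp (alpha ^ 2 / 2) * Ncdf (- (alpha / 2 * (x + / x))).

(* Main.v *)
Require Import Defs.
From Stdlib Require Import Reals Lra.
From Coquelicot Require Import Coquelicot.
Open Scope R_scope.

Definition g2 (t : R) : R := exp (- t ^ 2 / 2).
Definition P (x : R) : R := RInt g2 0 x.

Lemma g2_cont x : continuous g2 x.
Proof. apply (@ex_derive_continuous R_AbsRing R_NormedModule); unfold g2; auto_derive; auto. Qed.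

Lemma g2_pos x : 0 < g2 x.
Proof. apply exp_pos. Qed.

Lemma ex_RInt_g2 a b : ex_RInt g2 a b.
Proof. apply (@ex_RInt_continuous R_CompleteNormedModule); intros; apply g2_cont. Qed.

Lemma P_deriv x : is_derive P x (g2 x).
Proof.
  apply is_derive_RInt with 0.
  - apply filter_forall; intro y. apply (@RInt_correct R_CompleteNormedModule), ex_RInt_g2.
  - apply g2_cont.
Qed.

Definition fF (u t : R) : R := exp (- (u ^ 2 * (1 + t ^ 2)) / 2) / (1 + t ^ 2).
Definition dF (u t : R) : R := - u * exp (- (u ^ 2 * (1 + t ^ 2)) / 2).

Lemma pos1t t : 0 < 1 + t ^ 2.
Proof. nra. Qed.

Lemma fF_deriv u t : is_derive (fun z => fF z t) u (dF u t).
Proof.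
  unfold fF, dF. auto_derive; auto.
  replace (- (u * (u * 1) * (1 + t * (t * 1))) * / 2) with (- (u ^ 2 * (1 + t ^ 2)) / 2) by (simpl; field).
  pose proof (pos1t t). simpl in *. field. lra.
Qed.

Lemma dF_cont x t : continuity_2d_pt dF x t.
Proof.
  unfold dF.
  apply continuity_2d_pt_mult.
  - apply continuity_2d_pt_opp, continuity_2d_pt_id1.
  - apply continuity_1d_2d_pt_comp.
    + apply continuity_pt_filterlim. apply (@ex_derive_continuous R_AbsRing R_NormedModule). auto_derive. auto.
    + apply continuity_2d_pt_ext with (fun u v => (- (u * u * (1 + v * v))) * / 2).
      { intros; simpl; field. }
      apply continuity_2d_pt_mult; [|apply continuity_2d_pt_const].
      apply continuity_2d_pt_opp. apply continuity_2d_pt_mult.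
      * apply continuity_2d_pt_mult; apply continuity_2d_pt_id1.
      * apply continuity_2d_pt_plus; [apply continuity_2d_pt_const|].
        apply continuity_2d_pt_mult; apply continuity_2d_pt_id2.
Qed.

Definition Fd (x : R) : R := RInt (fF x) 0 1.

Lemma Fd_deriv x : is_derive Fd x (- g2 x * P x).
Proof.
  pose proof (is_derive_RInt_param fF 0 1 x) as H.
  unfold Fd.
  replace (- g2 x * P x) with (RInt (fun t => Derive (fun u => fF u t) x) 0 1).
  - apply H.
    + apply filter_forall; intros y t _. eexists. apply fF_deriv.
    + intros t _. apply continuity_2d_pt_ext with dF.
      { intros; symmetry; apply is_derive_unique, fF_deriv. }
      apply dF_cont.
    + apply filter_forall; intro y. apply (@ex_RInt_continuous R_CompleteNormedModule) ; intros z _.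
      apply (@ex_derive_continuous R_AbsRing R_NormedModule). unfold fF. auto_derive. pose proof (pos1t z); lra.
  - rewrite (RInt_ext _ (fun t => scal (- g2 x) (scal x (g2 (x * t + 0))))).
    + rewrite (@RInt_scal R_CompleteNormedModule). rewrite (@RInt_comp_lin R_CompleteNormedModule).
      * rewrite Rmult_0_r, Rmult_1_r, Rplus_0_l, Rplus_0_r. reflexivity.
      * apply ex_RInt_g2.
      * apply (ex_RInt_ext (fun t => scal x (g2 (x * t + 0)))).
        { intros; reflexivity. }
        apply (@ex_RInt_continuous R_CompleteNormedModule) ; intros z _. apply (@ex_derive_continuous R_AbsRing R_NormedModule).
        unfold scal, g2; simpl; unfold mult; simpl. auto_derive. auto.
    + intros t _. transitivity (dF x t). { apply is_derive_unique, fF_deriv. }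
      unfold dF, g2, scal; simpl; unfold mult; simpl.
      replace (exp (- (x * (x * 1) * (1 + t * (t * 1))) / 2)) with
        (exp (- (x * (x * 1)) / 2) * exp (- ((x * t + 0) * ((x * t + 0) * 1)) / 2)).
      { ring. }
      rewrite <- exp_plus. f_equal. field.
Qed.

Lemma exp_le_m x y : x <= y -> exp x <= exp y.
Proof. intros [H|H]. apply Rlt_le, exp_increasing; auto. subst; lra. Qed.

Definition h (x : R) : R := Fd x + P x * P x / 2.

Lemma h_deriv x : is_derive h x 0.
Proof.
  pose proof (Fd_deriv x) as H1.
  pose proof (is_derive_comp (fun y : R => y * y / 2) P x (P x) (g2 x)) as H2.
  assert (H3 : is_derive (fun y : R => y * y / 2) (P x) (P x)).
  { auto_derive; auto. field. }
  specialize (H2 H3 (P_deriv x)).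
  pose proof (is_derive_plus _ _ _ _ _ H1 H2) as H4.
  unfold h.
  replace 0 with (plus (- g2 x * P x) (scal (g2 x) (P x))).
  - exact H4.
  - unfold plus, scal; simpl; unfold mult; simpl. ring.
Qed.

Lemma P0 : P 0 = 0.
Proof. unfold P. rewrite RInt_point. reflexivity. Qed.

Lemma Fd0 : Fd 0 = PI / 4.
Proof.
  unfold Fd.
  rewrite (RInt_ext _ (fun t => / (1 + t ^ 2))).
  - rewrite (is_RInt_unique _ 0 1 (atan 1 - atan 0)).
    + rewrite atan_1, atan_0. ring.
    + apply (@is_RInt_derive R_CompleteNormedModule atan).
      * intros t _. apply is_derive_Reals, derivable_pt_lim_atan.
      * intros t _. apply (@ex_derive_continuous R_AbsRing R_NormedModule).
        auto_derive. pose proof (pos1t t). simpl in *. lra.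
  - intros t _. unfold fF. replace (- (0 ^ 2 * (1 + t ^ 2)) / 2) with 0 by (simpl; field).
    rewrite exp_0. unfold Rdiv. apply Rmult_1_l.
Qed.

Lemma h_const x : 0 <= x -> h x = PI / 4.
Proof.
  intros [Hx|Hx].
  - rewrite <- (eq_is_derive h 0 x).
    + unfold h. rewrite Fd0, P0. field.
    + intros t _. apply h_deriv.
    + exact Hx.
  - subst. unfold h. rewrite Fd0, P0. field.
Qed.

Lemma Fd_bounds x : 0 <= Fd x <= g2 x.
Proof.
  assert (Hex : ex_RInt (fF x) 0 1).
  { apply (@ex_RInt_continuous R_CompleteNormedModule); intros z _.
    apply (@ex_derive_continuous R_AbsRing R_NormedModule). unfold fF. auto_derive.
    pose proof (pos1t z); lra. }
  split.
  - apply RInt_ge_0; auto. lra. intros t _. unfold fF.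
    apply Rlt_le, Rdiv_lt_0_compat; [apply exp_pos | apply pos1t].
  - unfold Fd. apply Rle_trans with (RInt (fun _ => g2 x) 0 1).
    + apply RInt_le; auto. lra. apply ex_RInt_const.
      intros t Ht. unfold fF, g2.
      assert (Ha : 0 < exp (- (x ^ 2 * (1 + t ^ 2)) / 2)) by apply exp_pos.
      assert (Hb : exp (- (x ^ 2 * (1 + t ^ 2)) / 2) <= exp (- x ^ 2 / 2)).
      { apply exp_le_m. nra. }
      pose proof (pos1t t).
      assert (Hc : / (1 + t^2) * (1 + t^2) = 1) by (field; lra).
      assert (Hd : 0 < / (1 + t^2)) by (apply Rinv_0_lt_compat; lra).
      unfold Rdiv. nra.
    + rewrite RInt_const. unfold scal; simpl; unfold mult; simpl. lra.
Qed.

Lemma g2_lim : filterlim g2 (Rbar_locally p_infty) (locally 0).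
Proof.
  unfold g2.
  apply (filterlim_comp _ _ _ (fun x => - x ^ 2 / 2) exp _ (Rbar_locally m_infty)).
  - intros Q [M HM]. exists (Rabs M + 1). intros x Hx. apply HM.
    assert (-M <= Rabs M) by (rewrite <- Rabs_Ropp; apply Rle_abs).
    pose proof (Rabs_pos M). simpl. nra.
  - exact is_lim_exp_m.
Qed.

Lemma lim_comb {T} {F : (T -> Prop) -> Prop} {FF : Filter F} (f g : T -> R) a b E :
  filterlim f F (locally a) -> filterlim g F (locally b) ->
  filterlim (fun x => f x - E * g x) F (locally (a - E * b)).
Proof.
  intros Hf Hg.
  assert (H1 : filterlim (fun x => E * g x) F (locally (E * b))).
  { apply (filterlim_comp _ _ _ g (fun z => scal E z) F (locally b)); auto.
    apply (@filterlim_scal_r R_AbsRing R_NormedModule). }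
  assert (H2 : filterlim (fun x => opp (E * g x)) F (locally (opp (E * b)))).
  { apply (filterlim_comp _ _ _ (fun x => E * g x) opp F (locally (E * b))); auto.
    apply (@filterlim_opp R_AbsRing R_NormedModule). }
  apply (filterlim_comp_2 (G := locally a) (H := locally (opp (E * b))) f (fun x => opp (E * g x)) plus); auto.
  apply (@filterlim_plus R_AbsRing R_NormedModule).
Qed.

Definition c0 : R := sqrt (PI / 2).

Lemma P_nonneg x : 0 <= x -> 0 <= P x.
Proof.
  intros Hx. apply RInt_ge_0; auto. apply ex_RInt_g2. intros; apply Rlt_le, g2_pos.
Qed.

Lemma Fd_lim : filterlim Fd (Rbar_locally p_infty) (locally 0).
Proof.
  apply (is_lim_le_le_loc (fun _ => 0) g2 Fd p_infty 0).
  - exists 0. intros; apply Fd_bounds.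
  - apply is_lim_const.
  - exact g2_lim.
Qed.

Lemma P_lim : filterlim P (Rbar_locally p_infty) (locally c0).
Proof.
  assert (H1 := lim_comb (fun _ => PI / 2) Fd (PI / 2) 0 2 (filterlim_const _) Fd_lim).
  assert (H2 : filterlim (fun x => sqrt (PI / 2 - 2 * Fd x)) (Rbar_locally p_infty)
                 (locally (sqrt (PI / 2 - 2 * 0)))).
  { apply (filterlim_comp _ _ _ (fun x => PI / 2 - 2 * Fd x) sqrt _ (locally (PI / 2 - 2 * 0))); auto.
    apply continuity_pt_filterlim, continuity_pt_sqrt. pose proof PI_RGT_0. lra. }
  replace c0 with (sqrt (PI / 2 - 2 * 0)) by (unfold c0; f_equal; ring).
  apply (filterlim_ext_loc (fun x => sqrt (PI / 2 - 2 * Fd x))); auto.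
  exists 0. intros x Hx.
  pose proof (h_const x (Rlt_le _ _ Hx)) as Hh. unfold h in Hh.
  replace (PI / 2 - 2 * Fd x) with (P x * P x) by lra.
  apply sqrt_square. apply P_nonneg. lra.
Qed.

Lemma P_odd x : P (- x) = - P x.
Proof.
  unfold P.
  pose proof (@RInt_comp_lin R_CompleteNormedModule g2 (-1) 0 0 x (ex_RInt_g2 _ _)) as H.
  replace (-1 * 0 + 0) with 0 in H by ring.
  replace (-1 * x + 0) with (- x) in H by ring.
  rewrite <- H.
  rewrite (RInt_ext _ (fun y => scal (-1) (g2 y))).
  - rewrite (@RInt_scal R_CompleteNormedModule). unfold scal; simpl; unfold mult; simpl. ring.
    apply ex_RInt_g2.
  - intros y _. unfold g2. f_equal. f_equal. f_equal. simpl; ring.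
Qed.

Lemma P_lim_m : filterlim P (Rbar_locally m_infty) (locally (- c0)).
Proof.
  apply (filterlim_ext (fun y => opp (P (Ropp y)))).
  { intros y. rewrite P_odd. unfold opp; simpl. ring. }
  apply (filterlim_comp _ _ _ (fun y => P (Ropp y)) opp _ (locally c0)).
  - apply (filterlim_comp _ _ _ Ropp P _ (Rbar_locally p_infty)).
    + apply (filterlim_Rbar_opp m_infty).
    + exact P_lim.
  - apply (@filterlim_opp R_AbsRing R_NormedModule).
Qed.

Lemma c0_pos : 0 < c0.
Proof. unfold c0. apply sqrt_lt_R0. pose proof PI_RGT_0. lra. Qed.

Lemma sqrt2PI : sqrt (2 * PI) = 2 * c0.
Proof.
  unfold c0. replace (2 * PI) with (2 * 2 * (PI / 2)) by field.
  pose proof PI_RGT_0.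
  rewrite sqrt_mult; try lra. rewrite (sqrt_square 2); lra.
Qed.

Lemma Ncdf_eq x : Ncdf x = / (2 * c0) * (P x + c0).
Proof.
  unfold Ncdf. rewrite sqrt2PI. f_equal.
  apply is_RInt_gen_unique.
  assert (HD : forall y, Derive P y = g2 y) by (intros; apply is_derive_unique, P_deriv).
  pose proof (@is_RInt_gen_Derive (Rbar_locally m_infty) (at_point x) _ _ P (- c0) (P x)) as H.
  replace (P x + c0) with (P x - - c0) by ring.
  apply (is_RInt_gen_ext (Derive P)).
  - apply filter_forall. intros ab y _. apply HD.
  - apply H.
    + apply filter_forall. intros ab y _. eexists; apply P_deriv.
    + apply filter_forall. intros ab y _. apply (continuous_ext g2). intros; symmetry; apply HD.
      apply g2_cont.
    + exact P_lim_m.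
    + intros Q HQ. exact (locally_singleton _ _ HQ).
Qed.

Definition K0 : R := / (2 * c0).

Lemma Ncdf_eq2 x : Ncdf x = K0 * c0 - (- K0) * P x.
Proof. rewrite Ncdf_eq. unfold K0. ring. Qed.

Lemma N_lim_m : filterlim Ncdf (Rbar_locally m_infty) (locally 0).
Proof.
  apply (filterlim_ext (fun x => K0 * c0 - (- K0) * P x)).
  { intros; symmetry; apply Ncdf_eq2. }
  replace 0 with (K0 * c0 - (- K0) * (- c0)) by (unfold K0; field; pose proof c0_pos; lra).
  apply lim_comb. apply filterlim_const. exact P_lim_m.
Qed.

Lemma N_lim_p : filterlim Ncdf (Rbar_locally p_infty) (locally 1).
Proof.
  apply (filterlim_ext (fun x => K0 * c0 - (- K0) * P x)).
  { intros; symmetry; apply Ncdf_eq2. }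
  replace 1 with (K0 * c0 - (- K0) * c0) by (unfold K0; field; pose proof c0_pos; lra).
  apply lim_comb. apply filterlim_const. exact P_lim.
Qed.

Lemma N_deriv y : is_derive Ncdf y (K0 * g2 y).
Proof.
  apply (is_derive_ext (fun x => K0 * (P x + c0))).
  { intros; symmetry; unfold K0; apply Ncdf_eq. }
  replace (K0 * g2 y) with (K0 * plus (g2 y) zero) by (unfold plus, zero; simpl; ring).
  apply is_derive_scal. apply (is_derive_plus P (fun _ => c0)).
  apply P_deriv. auto_derive; auto.
Qed.

Definition Af (alpha x : R) : R := alpha / 2 * (x - / x).
Definition Bf (alpha x : R) : R := alpha / 2 * (x + / x).

Lemma key_id alpha x : 0 < x -> exp (alpha ^ 2 / 2) * g2 (- Bf alpha x) = g2 (Af alpha x).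
Proof.
  intros Hx. unfold g2, Af, Bf. rewrite <- exp_plus. f_equal. field. lra.
Qed.

Definition dchi (alpha x : R) : R := alpha * K0 * g2 (Af alpha x).

Lemma chi_deriv alpha x : 0 < x -> is_derive (chi alpha) x (dchi alpha x).
Proof.
  intros Hx.
  assert (HA : is_derive (Af alpha) x (alpha / 2 * (1 + / x ^ 2))).
  { unfold Af. auto_derive. lra. field. lra. }
  assert (HB : is_derive (fun y => - Bf alpha y) x (- (alpha / 2 * (1 - / x ^ 2)))).
  { unfold Bf. auto_derive. lra. field. lra. }
  pose proof (is_derive_comp Ncdf (Af alpha) x _ _ (N_deriv _) HA) as D1.
  pose proof (is_derive_comp Ncdf (fun y => - Bf alpha y) x _ _ (N_deriv _) HB) as D2.
  pose proof (is_derive_scal _ x (exp (alpha ^ 2 / 2)) _ D2) as D3.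
  pose proof (is_derive_minus _ _ x _ _ D1 D3) as D4.
  unfold chi. 
  replace (dchi alpha x) with
    (minus (scal (alpha / 2 * (1 + / x ^ 2)) (K0 * g2 (Af alpha x)))
       (exp (alpha ^ 2 / 2) * scal (- (alpha / 2 * (1 - / x ^ 2))) (K0 * g2 (- Bf alpha x)))).
  - exact D4.
  - unfold minus, plus, opp, scal; simpl; unfold mult; simpl.
    rewrite <- (key_id alpha x Hx). unfold dchi. rewrite <- (key_id alpha x Hx).
    match goal with |- ?a = ?b => change (@eq R a b) end. replace (alpha * (alpha * 1)) with (alpha ^ 2) by ring. field. lra.
Qed.

Lemma K0_pos : 0 < K0.
Proof. unfold K0. apply Rinv_0_lt_compat. pose proof c0_pos. lra. Qed.

Lemma dchi_pos alpha x : 0 < alpha -> 0 < dchi alpha x.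
Proof.
  intros Ha. unfold dchi. pose proof K0_pos. pose proof (g2_pos (Af alpha x)).
  apply Rmult_lt_0_compat; [apply Rmult_lt_0_compat|]; lra.
Qed.

Lemma conv_gen (f df : R -> R) x y t : x < y ->
  (forall z, x <= z <= y -> is_derive f z (df z)) ->
  (forall u v, x <= u -> u < v -> v <= y -> df u < df v) -> 0 < t < 1 ->
  f (t * x + (1 - t) * y) < t * f x + (1 - t) * f y.
Proof.
  intros Hxy Hd Hm Ht.
  set (z := t * x + (1 - t) * y).
  assert (Hxz : x < z) by (unfold z; nra).
  assert (Hzy : z < y) by (unfold z; nra).
  destruct (MVT_cor2 f df x z Hxz) as [c1 [E1 H1]].
  { intros c Hc. apply is_derive_Reals, Hd. lra. }
  destruct (MVT_cor2 f df z y Hzy) as [c2 [E2 H2]].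
  { intros c Hc. apply is_derive_Reals, Hd. lra. }
  assert (Hc : df c1 < df c2) by (apply Hm; lra).
  assert (Hzx : z - x = (1 - t) * (y - x)) by (unfold z; ring).
  assert (Hyz : y - z = t * (y - x)) by (unfold z; ring).
  assert (Hp : 0 < t * (1 - t) * (y - x) * (df c2 - df c1)).
  { apply Rmult_lt_0_compat; [|lra]. apply Rmult_lt_0_compat; [|lra]. nra. }
  assert (t * f x + (1 - t) * f y - f z = t * (1 - t) * (y - x) * (df c2 - df c1)).
  { replace (f x) with (f z - df c1 * (z - x)) by lra.
    replace (f y) with (f z + df c2 * (y - z)) by lra.
    rewrite Hzx, Hyz. ring. }
  lra.
Qed.

Lemma inv_facts x : 0 < x -> 0 < / x /\ x * / x = 1.
Proof. intros. split. apply Rinv_0_lt_compat; auto. field. lra. Qed.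

Lemma Af_lt alpha u v : 0 < alpha -> 0 < u -> u < v -> Af alpha u < Af alpha v.
Proof.
  intros Ha Hu Huv. unfold Af.
  destruct (inv_facts u Hu) as [Iu Eu]. destruct (inv_facts v ltac:(lra)) as [Iv Ev].
  assert (/ v < / u) by (apply Rinv_lt_contravar; nra).
  nra.
Qed.

Lemma Af_le0 alpha v : 0 < alpha -> 0 < v -> v <= 1 -> Af alpha v <= 0.
Proof.
  intros Ha Hv H1. unfold Af. destruct (inv_facts v Hv) as [Iv Ev].
  assert (1 <= / v) by nra. nra.
Qed.

Lemma Af_ge0 alpha v : 0 < alpha -> 1 <= v -> 0 <= Af alpha v.
Proof.
  intros Ha H1. unfold Af. destruct (inv_facts v ltac:(lra)) as [Iv Ev].
  assert (/ v <= 1) by nra. nra.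
Qed.

Lemma g2_lt a b : b ^ 2 < a ^ 2 -> g2 a < g2 b.
Proof. intros H. unfold g2. apply exp_increasing. lra. Qed.

Lemma dchi_incr alpha u v : 0 < alpha -> 0 < u -> u < v -> v <= 1 -> dchi alpha u < dchi alpha v.
Proof.
  intros Ha Hu Huv Hv. unfold dchi.
  pose proof (Af_lt alpha u v Ha Hu Huv). pose proof (Af_le0 alpha v Ha ltac:(lra) Hv).
  assert (g2 (Af alpha u) < g2 (Af alpha v)) by (apply g2_lt; nra).
  pose proof K0_pos. assert (0 < alpha * K0) by nra. nra.
Qed.

Lemma dchi_decr alpha u v : 0 < alpha -> 1 <= u -> u < v -> dchi alpha v < dchi alpha u.
Proof.
  intros Ha Hu Huv. unfold dchi.
  pose proof (Af_lt alpha u v Ha ltac:(lra) Huv). pose proof (Af_ge0 alpha u Ha Hu).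
  assert (g2 (Af alpha v) < g2 (Af alpha u)) by (apply g2_lt; nra).
  pose proof K0_pos. assert (0 < alpha * K0) by nra. nra.
Qed.

Lemma ball0_lt (d y : R) : ball (0 : R_UniformSpace) d y -> y < d.
Proof.
  intros H. change (Rabs (y - 0) < d) in H. apply Rabs_def2 in H. lra.
Qed.

Lemma Af_lim0 alpha : 0 < alpha -> filterlim (Af alpha) (at_right 0) (Rbar_locally m_infty).
Proof.
  intros Ha Q [M HM].
  assert (Hd : 0 < alpha / (alpha + 2 * Rabs M + 2)).
  { pose proof (Rabs_pos M). apply Rdiv_lt_0_compat; lra. }
  exists (mkposreal _ Hd). intros y Hy Hpos. apply HM.
  apply ball0_lt in Hy. simpl in Hy.
  pose proof (Rabs_pos M). assert (-M <= Rabs M) by (rewrite <- Rabs_Ropp; apply Rle_abs).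
  assert (Hy2 : y * (alpha + 2 * Rabs M + 2) < alpha).
  { apply (Rmult_lt_compat_r (alpha + 2 * Rabs M + 2)) in Hy; [|lra].
    replace (alpha / (alpha + 2 * Rabs M + 2) * (alpha + 2 * Rabs M + 2)) with alpha in Hy
      by (field; lra). lra. }
  destruct (inv_facts y Hpos) as [Iy Ey].
  assert (alpha + 2 * Rabs M + 2 < alpha * / y).
  { apply (Rmult_lt_compat_r (/ y)) in Hy2; auto.
    replace (y * (alpha + 2 * Rabs M + 2) * / y) with (alpha + 2 * Rabs M + 2) in Hy2
      by (field; lra). lra. }
  assert (y < 1) by nra.
  unfold Af. nra.
Qed.

Lemma Bf_lim0 alpha : 0 < alpha -> filterlim (fun x => - Bf alpha x) (at_right 0) (Rbar_locally m_infty).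
Proof.
  intros Ha Q [M HM].
  assert (Hd : 0 < alpha / (alpha + 2 * Rabs M + 2)).
  { pose proof (Rabs_pos M). apply Rdiv_lt_0_compat; lra. }
  exists (mkposreal _ Hd). intros y Hy Hpos. apply HM.
  apply ball0_lt in Hy. simpl in Hy.
  pose proof (Rabs_pos M). assert (-M <= Rabs M) by (rewrite <- Rabs_Ropp; apply Rle_abs).
  assert (Hy2 : y * (alpha + 2 * Rabs M + 2) < alpha).
  { apply (Rmult_lt_compat_r (alpha + 2 * Rabs M + 2)) in Hy; [|lra].
    replace (alpha / (alpha + 2 * Rabs M + 2) * (alpha + 2 * Rabs M + 2)) with alpha in Hy
      by (field; lra). lra. }
  destruct (inv_facts y Hpos) as [Iy Ey].
  assert (alpha + 2 * Rabs M + 2 < alpha * / y).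
  { apply (Rmult_lt_compat_r (/ y)) in Hy2; auto.
    replace (y * (alpha + 2 * Rabs M + 2) * / y) with (alpha + 2 * Rabs M + 2) in Hy2
      by (field; lra). lra. }
  unfold Bf. nra.
Qed.

Lemma Af_limp alpha : 0 < alpha -> filterlim (Af alpha) (Rbar_locally p_infty) (Rbar_locally p_infty).
Proof.
  intros Ha Q [M HM].
  exists (1 + 2 * Rabs M / alpha). intros y Hy. apply HM.
  pose proof (Rabs_pos M). assert (M <= Rabs M) by apply Rle_abs.
  assert (0 <= 2 * Rabs M / alpha) by (apply Rmult_le_pos; [lra| apply Rlt_le, Rinv_0_lt_compat; lra]).
  assert (Hy2 : alpha + 2 * Rabs M < alpha * y).
  { apply (Rmult_lt_compat_l alpha) in Hy; auto.
    replace (alpha * (1 + 2 * Rabs M / alpha)) with (alpha + 2 * Rabs M) in Hy by (field; lra). lra. }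
  destruct (inv_facts y ltac:(lra)) as [Iy Ey].
  assert (/ y < 1) by nra.
  unfold Af. nra.
Qed.

Lemma Bf_limp alpha : 0 < alpha -> filterlim (fun x => - Bf alpha x) (Rbar_locally p_infty) (Rbar_locally m_infty).
Proof.
  intros Ha Q [M HM].
  exists (1 + 2 * Rabs M / alpha). intros y Hy. apply HM.
  pose proof (Rabs_pos M). assert (-M <= Rabs M) by (rewrite <- Rabs_Ropp; apply Rle_abs).
  assert (0 <= 2 * Rabs M / alpha) by (apply Rmult_le_pos; [lra| apply Rlt_le, Rinv_0_lt_compat; lra]).
  assert (Hy2 : alpha + 2 * Rabs M < alpha * y).
  { apply (Rmult_lt_compat_l alpha) in Hy; auto.
    replace (alpha * (1 + 2 * Rabs M / alpha)) with (alpha + 2 * Rabs M) in Hy by (field; lra). lra. }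
  destruct (inv_facts y ltac:(lra)) as [Iy Ey].
  unfold Bf. nra.
Qed.

Theorem proposition1 (alpha : R) (halpha : 0 < alpha) :
  (* (i) limits *)
  (filterlim (chi alpha) (at_right 0) (locally 0)
   /\ filterlim (chi alpha) (Rbar_locally p_infty) (locally 1))
  (* (ii) strictly increasing on (0, +oo) *)
  /\ (forall x y : R, 0 < x -> x < y -> chi alpha x < chi alpha y)
  (* (iii) strictly convex on (0, 1] *)
  /\ (forall x y t : R, 0 < x -> x < y -> y <= 1 -> 0 < t < 1 ->
        chi alpha (t * x + (1 - t) * y) < t * chi alpha x + (1 - t) * chi alpha y)
  (* (iii) strictly concave on [1, +oo) *)
  /\ (forall x y t : R, 1 <= x -> x < y -> 0 < t < 1 ->
        t * chi alpha x + (1 - t) * chi alpha y < chi alpha (t * x + (1 - t) * y)).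
Proof.
  assert (Hchi : forall x, chi alpha x = Ncdf (Af alpha x) - exp (alpha ^ 2 / 2) * Ncdf (- Bf alpha x)).
  { intros; reflexivity. }
  split; [split|split; [|split]].
  - apply (filterlim_ext (fun x => Ncdf (Af alpha x) - exp (alpha ^ 2 / 2) * Ncdf (- Bf alpha x))).
    { intros; symmetry; apply Hchi. }
    assert (L := lim_comb (F := at_right 0) (fun x => Ncdf (Af alpha x)) (fun x => Ncdf (- Bf alpha x)) 0 0 (exp (alpha ^ 2 / 2))).
    replace (0 - exp (alpha ^ 2 / 2) * 0) with 0 in L by ring.
    apply L.
    + apply (filterlim_comp _ _ _ (Af alpha) Ncdf _ (Rbar_locally m_infty)).
      apply Af_lim0; auto. exact N_lim_m.
    + apply (filterlim_comp _ _ _ (fun x => - Bf alpha x) Ncdf _ (Rbar_locally m_infty)).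
      apply Bf_lim0; auto. exact N_lim_m.
  - apply (filterlim_ext (fun x => Ncdf (Af alpha x) - exp (alpha ^ 2 / 2) * Ncdf (- Bf alpha x))).
    { intros; symmetry; apply Hchi. }
    replace 1 with (1 - exp (alpha ^ 2 / 2) * 0) by ring.
    apply lim_comb.
    + apply (filterlim_comp _ _ _ (Af alpha) Ncdf _ (Rbar_locally p_infty)).
      apply Af_limp; auto. exact N_lim_p.
    + apply (filterlim_comp _ _ _ (fun x => - Bf alpha x) Ncdf _ (Rbar_locally m_infty)).
      apply Bf_limp; auto. exact N_lim_m.
  - intros x y Hx Hxy.
    apply (incr_function (chi alpha) (Finite 0) p_infty (dchi alpha)).
    + intros z Hz _. apply chi_deriv. exact Hz.
    + intros z _ _. apply dchi_pos; auto.
    + exact Hx.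
    + exact Hxy.
    + exact I.
  - intros x y t Hx Hxy Hy Ht.
    apply (conv_gen (chi alpha) (dchi alpha)); auto.
    + intros z Hz. apply chi_deriv. lra.
    + intros u v Hu Huv Hv. apply dchi_incr; lra.
  - intros x y t Hx Hxy Ht.
    assert (H := conv_gen (fun z => - chi alpha z) (fun z => - dchi alpha z) x y t Hxy).
    assert (H' : - chi alpha (t * x + (1 - t) * y) < t * - chi alpha x + (1 - t) * - chi alpha y).
    { apply H; auto.
      - intros z Hz. apply (is_derive_opp (chi alpha)). apply chi_deriv. lra.
      - intros u v Hu Huv Hv. pose proof (dchi_decr alpha u v halpha ltac:(lra) Huv). lra. }
    lra.
Qed.
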